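(* Let $R$ be a commutative ring with $\mathbb{Q}\subseteq R$, let $\mathcal{A}$ be a commutative unital $R$-algebra, and let $\mathcal{E}$ be a finitely generated projective $\mathcal{A}$-module with a symmetric, strongly nondegenerate, full $\mathcal{A}$-bilinear form $\langle\cdot,\cdot\rangle$. Equip $\mathcal{C}^\bullet(\mathcal{E})=\bigoplus_{r\ge 0}\mathcal{C}^r(\mathcal{E})$ with the bracket $[\cdot,\cdot]$ and the product $\wedge$ described in the context. Then $(\mathcal{C}^\bullet(\mathcal{E}),[\cdot,\cdot],\wedge)$ is a graded Poisson algebra of degree $-2$. That is: (i) $\wedge$ is associative, graded commutative and of degree $0$; (ii) $[\cdot,\cdot]$ maps $\mathcal{C}^r\times\mathcal{C}^s$ to $\mathcal{C}^{r+s-2}$ and is graded skew-symmetric; (iii) $[\cdot,\cdot]$ satisfies the graded Jacobi identity $[\mathsf{C}_1,[\mathsf{C}_2,\mathsf{C}_3]]=[[\mathsf{C}_1,\mathsf{C}_2],\mathsf{C}_3]+(-1)^{rs}[\mathsf{C}_2,[\mathsf{C}_1,\mathsf{C}_3]]$; (iv) the Leibniz rule $[\mathsf{C}_1,\mathsf{C}_2\wedge\mathsf{C}_3]=[\mathsf{C}_1,\mathsf{C}_2]\wedge\mathsf{C}_3+(-1)^{rs}\mathsf{C}_2\wedge[\mathsf{C}_1,\mathsf{C}_3]$ holds. In (iii) and (iv), $\mathsf{C}_1\in\mathcal{C}^r(\mathcal{E})$, $\mathsf{C}_2\in\mathcal{C}^s(\mathcal{E})$ and $\mathsf{C}_3\in\mathcal{C}^t(\mathcal{E})$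 are arbitrary.
   Context: The form $\langle\cdot,\cdot\rangle:\mathcal{E}\times\mathcal{E}\to\mathcal{A}$ is strongly nondegenerate if the induced map $\mathcal{E}\to\operatorname{Hom}_{\mathcal{A}}(\mathcal{E},\mathcal{A})$ is an isomorphism. It is full if every $a\in\mathcal{A}$ is a finite sum $\sum_i\langle x_i,y_i\rangle$ with $x_i,y_i\in\mathcal{E}$. $\operatorname{Der}(\mathcal{A})$ denotes the $R$-linear derivations of $\mathcal{A}$. Set $\mathcal{C}^0(\mathcal{E})=\mathcal{A}$ and $\mathcal{C}^1(\mathcal{E})=\mathcal{E}$. For $r\ge2$, $\mathcal{C}^r(\mathcal{E})$ is the set of $\mathsf{C}\in\operatorname{Hom}_R(\mathcal{E}^{\otimes_R (r-1)},\mathcal{E})$ for which there is an $R$-multilinear map $\sigma_{\mathsf{C}}:\mathcal{E}^{\otimes_R(r-2)}\to\operatorname{Der}(\mathcal{A})$ (the symbol) satisfying two conditions: (1) $\sigma_{\mathsf{C}}(x_1,\dots,x_{r-2})\langle u,w\rangle=\langle \mathsf{C}(x_1,\dots,x_{r-2},u),w\rangle+\langle u,\mathsf{C}(x_1,\dots,x_{r-2},w)\rangle$ for all arguments; (2) if $r\ge3$, then for all $x_1,\dots,x_{r-1},u\in\mathcal{E}$ and $1\le i\le r-2$, $\langle \mathsf{C}(\dots,x_i,x_{i+1},\dots)+\mathsf{C}(\dots,x_{i+1},x_i,\dots),u\rangle=\sigma_{\mathsf{C}}(x_1,\dots,\widehat{x_i},\widehat{x_{i+1}},\dots,x_{r-1},u)\langle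 x_i,x_{i+1}\rangle$. For $r=2$ the symbol is a single derivation. For $\mathsf{C}\in\mathcal{C}^r(\mathcal{E})$ with $r\ge2$ and $x\in\mathcal{E}$, $i_x\mathsf{C}$ denotes $\mathsf{C}$ with $x$ inserted in the first argument. One has $i_x\mathsf{C}\in\mathcal{C}^{r-1}(\mathcal{E})$. The bracket $[\cdot,\cdot]$ is the unique $R$-bilinear, graded skew-symmetric map ($[\mathsf{C}_1,\mathsf{C}_2]=-(-1)^{rs}[\mathsf{C}_2,\mathsf{C}_1]$) sending $\mathcal{C}^r\times\mathcal{C}^s$ to $\mathcal{C}^{r+s-2}$ such that, for $a,b\in\mathcal{A}$, $x,y\in\mathcal{E}$, $\mathsf{D}\in\mathcal{C}^2(\mathcal{E})$ and $\mathsf{C}\in\mathcal{C}^r(\mathcal{E})$ with $r\ge2$: - $[a,b]=0$ and $[a,x]=0=[x,a]$; - $[x,y]=\langle x,y\rangle$; - $[\mathsf{D},a]=\sigma_{\mathsf{D}}(a)=-[a,\mathsf{D}]$; - $[\mathsf{C},x]=i_x\mathsf{C}=(-1)^{r+1}[x,\mathsf{C}]$; - the recursion $[[\mathsf{C}_1,\mathsf{C}_2],x]=i_x[\mathsf{C}_1,\mathsf{C}_2]=(-1)^s[[\mathsf{C}_1,x],\mathsf{C}_2]+[\mathsf{C}_1,[\mathsf{C}_2,x]]$ holds for $\mathsf{C}_1\in\mathcal{C}^r$, $\mathsf{C}_2\in\mathcal{C}^s$. The product $\wedge$ is the unique $R$-bilinear product of degree $0$ on $\mathcal{C}^\bullet(\mathcal{E})$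 such that $a\wedge b=ab$, $a\wedge x=ax=x\wedge a$, and $[\mathsf{C}_1\wedge\mathsf{C}_2,x]=(-1)^s[\mathsf{C}_1,x]\wedge\mathsf{C}_2+\mathsf{C}_1\wedge[\mathsf{C}_2,x]$ for $\mathsf{C}_1\in\mathcal{C}^r,\mathsf{C}_2\in\mathcal{C}^s$, $x\in\mathcal{E}$. *)

(* Defs.v *)
From HB Require Import structures.
From mathcomp Require Import all_boot all_order all_algebra.
Set Implicit Arguments.
Unset Strict Implicit.
Unset Printing Implicit Defensive.
Import GRing.Theory.
Local Open Scope ring_scope.

(* "Q is contained in R": every positive integer is invertible in R. *)
Definition Q_in_ring (R : comNzRingType) : Prop :=
  forall n : nat, (0 < n)%N -> exists y : R, y * n%:R = 1.

Section Setting.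
Variables (R : comNzRingType) (A : comAlgType R) (E : lmodType A).

(* the R-module structure of E, by restriction of scalars along R -> A *)
Definition rs (c : R) (x : E) : E := c%:A *: x.

Definition A_linear_map (V W : lmodType A) (f : V -> W) : Prop :=
  forall (c : A) (x y : V), f (c *: x + y) = c *: f x + f y.

(* finitely generated projective = direct summand (retract) of some A^n *)
Definition fg_projective : Prop :=
  exists (n : nat) (i : E -> 'rV[A]_n) (p : 'rV[A]_n -> E),
    A_linear_map i /\ A_linear_map p /\ cancel i p.

Definition is_derivation (delta : A -> A) : Prop :=
  (forall (c : R) (a b : A), delta (c *: a + b) = c *: delta a + delta b) /\
  (forall a b : A, delta (a * b) = delta a * b + a * delta b).

(* An R-multilinear map E^n -> E, encoded as a function on lists which is only
   evaluated on lists of length n. *)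
Definition multilinE (n : nat) (f : seq E -> E) : Prop :=
  forall (p q : seq E) (x y : E) (c : R), (size p + size q).+1 = n ->
    f (p ++ (rs c x + y) :: q) = rs c (f (p ++ x :: q)) + f (p ++ y :: q).

Definition multilinDer (n : nat) (sigma : seq E -> A -> A) : Prop :=
  (forall xs, size xs = n -> is_derivation (sigma xs)) /\
  (forall (p q : seq E) (x y : E) (c : R) (a : A), (size p + size q).+1 = n ->
    sigma (p ++ (rs c x + y) :: q) a
      = c *: sigma (p ++ x :: q) a + sigma (p ++ y :: q) a).

Variable g : E -> E -> A.

Definition form_is_symmetric : Prop := forall x y, g x y = g y x.

Definition form_is_A_bilinear : Prop :=
  (forall (c : A) x y z, g (c *: x + y) z = c * g x z + g y z) /\
  (forall (c : A) x y z, g x (c *: y + z) = c * g x y + g x z).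

(* E -> Hom_A(E, A), x |-> <x, .>, is bijective *)
Definition form_is_strongly_nondegenerate : Prop :=
  forall phi : E -> A,
    (forall (c : A) x y, phi (c *: x + y) = c * phi x + phi y) ->
    exists! x : E, forall y, phi y = g x y.

Definition form_is_full : Prop :=
  forall a : A, exists s : seq (E * E), a = \sum_(p <- s) g p.1 p.2.

(* sigma is a symbol for the (r-1)-ary map f (r >= 2): conditions (1) and (2) *)
Definition symbol_spec (r : nat) (f : seq E -> E) (sigma : seq E -> A -> A) : Prop :=
  multilinDer (r - 2) sigma /\
  (forall (xs : seq E) (u w : E), size xs = (r - 2)%N ->
     sigma xs (g u w) = g (f (rcons xs u)) w + g u (f (rcons xs w))) /\
  ((3 <= r)%N -> forall (p q : seq E) (x y u : E), (size p + size q + 3)%N = r ->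
     g (f (p ++ x :: y :: q) + f (p ++ y :: x :: q)) u
       = sigma (p ++ q ++ [:: u]) (g x y)).

(* f (on lists of length r-1) is an element of C^r(E), r >= 2 *)
Definition is_cochain (r : nat) (f : seq E -> E) : Prop :=
  multilinE r.-1 f /\ exists sigma, symbol_spec r f sigma.

(* Ambient type for C^.(E) = (+)_r C^r(E): the A-component (degree 0) and a
   function on lists; its restriction to lists of length r-1 is the degree r
   component (r >= 1).  The degree-1 component is the value at [::]. *)
Record D := mkD { d0 : A ; d1 : seq E -> E }.

Definition zeroD : D := mkD 0 (fun _ => 0).
Definition addD (u v : D) : D := mkD (d0 u + d0 v) (fun xs => d1 u xs + d1 v xs).
Definition oppD (u : D) : D := mkD (- d0 u) (fun xs => - d1 u xs).
Definition scaleD (c : R) (u : D) : D := mkD (c *: d0 u) (fun xs => rs c (d1 u xs)).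
Definition signD (b : bool) (u : D) : D := if b then oppD u else u.

Definition ofA (a : A) : D := mkD a (fun _ => 0).
Definition ofE (x : E) : D := mkD 0 (fun xs => if xs is [::] then x else 0).
Definition ins (x : E) (u : D) : D := mkD 0 (fun xs => d1 u (x :: xs)).

Definition homog (r : nat) (u : D) : Prop :=
  if r is 0 then forall xs, d1 u xs = 0
  else d0 u = 0 /\ forall xs, size xs != r.-1 -> d1 u xs = 0.

(* u is an element of C^.(E) (finite direct sum, components in C^r(E)) *)
Definition inC (u : D) : Prop :=
  (exists N, forall xs, (N <= size xs)%N -> d1 u xs = 0) /\
  (forall r, (2 <= r)%N -> is_cochain r (d1 u)).

Definition inCr (r : nat) (u : D) : Prop := homog r u /\ inC u.

Record bracket_spec (br : D -> D -> D) : Prop := {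
  br_linl : forall (c : R) u v w, inC u -> inC v -> inC w ->
    br (addD (scaleD c u) v) w = addD (scaleD c (br u w)) (br v w);
  br_linr : forall (c : R) u v w, inC u -> inC v -> inC w ->
    br w (addD (scaleD c u) v) = addD (scaleD c (br w u)) (br w v);
  br_deg : forall r s u v, inCr r u -> inCr s v ->
    if (2 <= r + s)%N then inCr (r + s - 2) (br u v) else br u v = zeroD;
  br_skew : forall r s u v, inCr r u -> inCr s v ->
    br u v = signD (~~ odd (r * s)) (br v u);
  br_AA : forall a b, br (ofA a) (ofA b) = zeroD;
  br_AE : forall a x, br (ofA a) (ofE x) = zeroD /\ br (ofE x) (ofA a) = zeroD;
  br_EE : forall x y, br (ofE x) (ofE y) = ofA (g x y);
  br_2A : forall u sigma a, inCr 2 u -> symbol_spec 2 (d1 u) sigma ->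
    br u (ofA a) = ofA (sigma [::] a) /\ br (ofA a) u = oppD (ofA (sigma [::] a));
  br_rE : forall r u x, (2 <= r)%N -> inCr r u ->
    br u (ofE x) = ins x u /\ br (ofE x) u = signD (odd r.+1) (ins x u);
  br_rec : forall r s u v x, inCr r u -> inCr s v ->
    br (br u v) (ofE x)
      = addD (signD (odd s) (br (br u (ofE x)) v)) (br u (br v (ofE x)))
}.

Record wedge_spec (br wd : D -> D -> D) : Prop := {
  wd_linl : forall (c : R) u v w, inC u -> inC v -> inC w ->
    wd (addD (scaleD c u) v) w = addD (scaleD c (wd u w)) (wd v w);
  wd_linr : forall (c : R) u v w, inC u -> inC v -> inC w ->
    wd w (addD (scaleD c u) v) = addD (scaleD c (wd w u)) (wd w v);
  wd_deg : forall r s u v, inCr r u -> inCr s v -> inCr (r + s) (wd u v);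
  wd_AA : forall a b, wd (ofA a) (ofA b) = ofA (a * b);
  wd_AE : forall a x, wd (ofA a) (ofE x) = ofE (a *: x) /\ wd (ofE x) (ofA a) = ofE (a *: x);
  wd_rec : forall r s u v x, inCr r u -> inCr s v ->
    br (wd u v) (ofE x)
      = addD (signD (odd s) (wd (br u (ofE x)) v)) (wd u (br v (ofE x)))
}.

End Setting.

(* Main.v *)
From HB Require Import structures.
Require Import Defs.
From mathcomp Require Import all_boot all_order all_algebra.
From mathcomp Require Import ring zify boolp.
Set Implicit Arguments. Unset Strict Implicit. Unset Printing Implicit Defensive.
Import GRing.Theory.
Local Open Scope ring_scope.

Definition TX (V : zmodType) := (int * V)%type.
HB.instance Definition _ (V : zmodType) := GRing.Zmodule.on (TX V).
Section TXS.
Variable V : zmodType.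
Definition txmul (a b : TX V) : TX V := (a.1 * b.1, a.2 *~ b.1 + b.2 *~ a.1).
Definition txone : TX V := (1, 0).
Lemma txA : associative txmul.
Proof.
move=> [n u] [m v] [k w]; rewrite /txmul /=; congr pair; first by rewrite mulrA.
rewrite !mulrzDl -!mulrzA addrA [k * n]mulrC [m * n]mulrC.
by []. Qed.
Lemma txC : commutative txmul.
Proof. by move=> [n u] [m v]; rewrite /txmul /= mulrC addrC. Qed.
Lemma tx1 : left_id txone txmul.
Proof. by move=> [n u]; rewrite /txmul /= mul1r mul0rz add0r mulr1z. Qed.
Lemma txD : left_distributive txmul +%R.
Proof.
move=> [n u] [m v] [k w]; rewrite /txmul /=; congr pair; first by rewrite mulrDl.
rewrite mulrzDl mulrzDr; rewrite -!addrA; congr (_ + _).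
by rewrite addrCA.
Qed.
Lemma tx10 : txone != 0.
Proof. by apply/eqP => [[]]. Qed.
End TXS.
HB.instance Definition _ (V : zmodType) :=
  GRing.Zmodule_isComNzRing.Build (TX V) (@txA V) (@txC V) (@tx1 V) (@txD V) (@tx10 V).
Definition emb (V : zmodType) (x : V) : TX V := (0, x).
Lemma embD (V : zmodType) (x y : V) : emb (x + y) = emb x + emb y.
Proof. by rewrite /emb; congr pair; rewrite addr0. Qed.
Lemma embN (V : zmodType) (x : V) : emb (- x) = - emb x.
Proof. by rewrite /emb; congr pair; rewrite oppr0. Qed.
Lemma emb0 (V : zmodType) : emb (0 : V) = 0.
Proof. by []. Qed.
Lemma emb_inj (V : zmodType) (x y : V) : emb x = emb y -> x = y.
Proof. by case. Qed.
Ltac zring := apply: emb_inj; rewrite ?(embD, embN, emb0); ring.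

HB.instance Definition _ (R : comNzRingType) (A : comAlgType R) (E : lmodType A) := gen_eqMixin (D E).
HB.instance Definition _ (R : comNzRingType) (A : comAlgType R) (E : lmodType A) := gen_choiceMixin (D E).

Section DZ.
Variables (R : comNzRingType) (A : comAlgType R) (E : lmodType A).
Lemma eqD (u v : D E) : d0 u = d0 v -> (forall xs, d1 u xs = d1 v xs) -> u = v.
Proof. case: u v => [a f] [b h] /= -> H; congr mkD; exact: funext. Qed.
Lemma addDA : associative (@addD R A E).
Proof. move=> u v w; apply: eqD => [|xs] /=; exact: addrA. Qed.
Lemma addDC : commutative (@addD R A E).
Proof. move=> u v; apply: eqD => [|xs] /=; exact: addrC. Qed.
Lemma add0D : left_id (zeroD E) (@addD R A E).
Proof. move=> u; apply: eqD => [|xs] /=; exact: add0r. Qed.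
Lemma addND : left_inverse (zeroD E) (@oppD R A E) (@addD R A E).
Proof. move=> u; apply: eqD => [|xs] /=; exact: addNr. Qed.
End DZ.
HB.instance Definition _ (R : comNzRingType) (A : comAlgType R) (E : lmodType A) :=
  GRing.isZmodule.Build (D E) (@addDA R A E) (@addDC R A E) (@add0D R A E) (@addND R A E).

Section Basic.
Variables (R : comNzRingType) (A : comAlgType R) (E : lmodType A).
Implicit Types (u v w : D E).
Lemma addDE u v : addD u v = u + v. Proof. by []. Qed.
Lemma oppDE u : oppD u = - u. Proof. by []. Qed.
Lemma zeroDE : zeroD E = 0. Proof. by []. Qed.
Lemma d0D u v : d0 (u + v) = d0 u + d0 v. Proof. by []. Qed.
Lemma d1D u v xs : d1 (u + v) xs = d1 u xs + d1 v xs. Proof. by []. Qed.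
Lemma d0N u : d0 (- u) = - d0 u. Proof. by []. Qed.
Lemma d1N u xs : d1 (- u) xs = - d1 u xs. Proof. by []. Qed.
Lemma d00 : d0 (0 : D E) = 0. Proof. by []. Qed.
Lemma d10 xs : d1 (0 : D E) xs = 0. Proof. by []. Qed.
Lemma signDE b u : signD b u = if b then - u else u. Proof. by []. Qed.
Lemma scaleD1 u : scaleD 1 u = u.
Proof. apply: eqD => [|xs] /=; first by rewrite scale1r. by rewrite /rs !scale1r. Qed.
Lemma scaleDN1 u : scaleD (-1) u = - u.
Proof. apply: eqD => [|xs] /=; first by rewrite scaleN1r. by rewrite /rs !scaleN1r. Qed.
Lemma rsD c (x y : E) : rs c (x + y) = rs c x + rs c y.
Proof. by rewrite /rs scalerDr. Qed.
Lemma rsN c (x : E) : rs c (- x) = - rs c x.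
Proof. by rewrite /rs scalerN. Qed.
Lemma rs0 c : rs c (0 : E) = 0.
Proof. by rewrite /rs scaler0. Qed.
Lemma ofAD (a b : A) : ofA E (a + b) = ofA E a + ofA E b.
Proof. by apply: eqD => [|xs] //=; rewrite addr0. Qed.
Lemma ofAN (a : A) : ofA E (- a) = - ofA E a.
Proof. by apply: eqD => [|xs] //=; rewrite oppr0. Qed.
Lemma ofA0 : ofA E 0 = 0. Proof. by []. Qed.
Lemma signD0 b : signD b (0 : D E) = 0. Proof. by case: b => //=; rewrite oppDE oppr0. Qed.
Lemma signDD b u v : signD b (u + v) = signD b u + signD b v.
Proof. by case: b => //=; rewrite !oppDE opprD. Qed.
Lemma signDN b u : signD b (- u) = - signD b u.
Proof. by case: b. Qed.
Lemma signDK b c u : signD b (signD c u) = signD (b (+) c) u.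
Proof. by case: b; case: c => //=; rewrite !oppDE opprK. Qed.
End Basic.

Section Lin.
Variables (R : comNzRingType) (A : comAlgType R) (E : lmodType A).
Variable P : D E -> Prop.
Hypothesis P0 : P 0.
Variable f : D E -> D E.
Hypothesis flin : forall (c : R) u v, P u -> P v ->
  f (addD (scaleD c u) v) = addD (scaleD c (f u)) (f v).
Lemma flinD u v : P u -> P v -> f (u + v) = f u + f v.
Proof. by move=> Pu Pv; have := flin 1 Pu Pv; rewrite !scaleD1. Qed.
Lemma flin0 : f 0 = 0.
Proof.
have := flinD P0 P0; rewrite addr0 => H; apply: (addrI (f 0)); by rewrite addr0 -H.
Qed.
Lemma flinN u : P u -> f (- u) = - f u.
Proof. by move=> Pu; have := flin (-1) Pu P0; rewrite !scaleDN1 !addDE addr0 flin0 addr0. Qed.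
Lemma flinS b u : P u -> f (signD b u) = signD b (f u).
Proof. by case: b => //= Pu; exact: flinN. Qed.
End Lin.

Section Cochains.
Variables (R : comNzRingType) (A : comAlgType R) (E : lmodType A) (g : E -> E -> A).
Hypotheses (gbil : form_is_A_bilinear g) (gsym : form_is_symmetric g).
Local Notation der := (@is_derivation R A).
Local Notation mlD := (@multilinDer R A E).
Local Notation mlE := (@multilinE R A E).

Lemma gDl x y z : g (x + y) z = g x z + g y z.
Proof. by have := gbil.1 1 x y z; rewrite scale1r mul1r. Qed.
Lemma g0l z : g 0 z = 0.
Proof. by have := gDl 0 0 z; rewrite addr0 => H; apply: (addrI (g 0 z)); rewrite addr0 -H. Qed.
Lemma gZl c x z : g (c *: x) z = c * g x z.
Proof. by have := gbil.1 c x 0 z; rewrite addr0 g0l addr0. Qed.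
Lemma gNl x z : g (- x) z = - g x z.
Proof. by rewrite -scaleN1r gZl mulN1r. Qed.
Lemma gDr x y z : g z (x + y) = g z x + g z y.
Proof. by rewrite !(gsym z) gDl. Qed.
Lemma g0r z : g z 0 = 0.
Proof. by rewrite gsym g0l. Qed.
Lemma gZr c x z : g z (c *: x) = c * g z x.
Proof. by rewrite !(gsym z) gZl. Qed.
Lemma gNr x z : g z (- x) = - g z x.
Proof. by rewrite !(gsym z) gNl. Qed.

Lemma derD d a b : der d -> d (a + b) = d a + d b.
Proof. by case=> H _; have := H 1 a b; rewrite !scale1r. Qed.
Lemma der0 d : der d -> d 0 = 0.
Proof. by move=> Hd; have := derD 0 0 Hd; rewrite addr0 => H; apply: (addrI (d 0)); rewrite addr0 -H. Qed.
Lemma der_zero : der (fun _ : A => 0).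
Proof. by split=> *; rewrite ?scaler0 ?mulr0 ?mul0r !addr0. Qed.
Lemma der_add d1 d2 : der d1 -> der d2 ->
  der (fun a => d1 a + d2 a).
Proof.
case=> H1 K1 [H2 K2]; split=> *; first by rewrite H1 H2 scalerDr; zring.
by rewrite K1 K2 mulrDl mulrDr; ring.
Qed.
Lemma der_opp d : der d -> der (fun a => - d a).
Proof.
case=> H K; split=> *; first by rewrite H scalerN opprD.
by rewrite K mulNr mulrN opprD.
Qed.

Lemma mlE_zero n : mlE n (fun _ : seq E => 0).
Proof. by move=> *; rewrite rs0 addr0. Qed.
Lemma mlE_add n f h : mlE n f -> mlE n h -> mlE n (fun xs => f xs + h xs).
Proof. by move=> Hf Hh p q x y c Hs; rewrite Hf // Hh // rsD; zring. Qed.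
Lemma mlE_opp n f : mlE n f -> mlE n (fun xs => - f xs).
Proof. by move=> Hf p q x y c Hs; rewrite Hf // rsN opprD. Qed.

Lemma mlD_zero n : mlD n (fun _ _ => 0 : A).
Proof. by split=> *; [exact: der_zero | rewrite scaler0 addr0]. Qed.
Lemma mlD_add n s1 s2 : mlD n s1 -> mlD n s2 ->
  mlD n (fun xs a => s1 xs a + s2 xs a).
Proof.
case=> H1 K1 [H2 K2]; split=> [xs Hxs|p q x y c a Hs]; first exact: der_add (H1 _ Hxs) (H2 _ Hxs).
by rewrite K1 // K2 // scalerDr; zring.
Qed.
Lemma mlD_opp n s : mlD n s -> mlD n (fun xs a => - s xs a).
Proof.
case=> H K; split=> [xs Hxs|p q x y c a Hs]; first exact: der_opp (H _ Hxs).
by rewrite K // scalerN opprD.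
Qed.

Lemma cochain_zero r : is_cochain g r (fun _ => 0).
Proof.
split; first exact: mlE_zero.
exists (fun _ _ => 0); split; first exact: mlD_zero.
split=> [xs u w _|_ p q x y u _]; first by rewrite g0l g0r addr0.
by rewrite addr0 g0l.
Qed.
Lemma cochain_add r f h : is_cochain g r f -> is_cochain g r h ->
  is_cochain g r (fun xs => f xs + h xs).
Proof.
case=> Mf [s1 [D1 [C1 S1]]] [Mh [s2 [D2 [C2 S2]]]]; split; first exact: mlE_add.
exists (fun xs a => s1 xs a + s2 xs a); split; first exact: mlD_add.
split=> [xs u w Hs|Hr p q x y u Hs]; first by rewrite C1 // C2 // !gDl !gDr; ring.
rewrite -S1 // -S2 // !gDl; ring.
Qed.
Lemma cochain_opp r f : is_cochain g r f -> is_cochain g r (fun xs => - f xs).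
Proof.
case=> Mf [s1 [D1 [C1 S1]]]; split; first exact: mlE_opp.
exists (fun xs a => - s1 xs a); split; first exact: mlD_opp.
split=> [xs u w Hs|Hr p q x y u Hs]; first by rewrite C1 // !gNl !gNr opprD.
by rewrite -S1 // !gDl !gNl opprD.
Qed.
Lemma cochain_ext r f h : (2 <= r)%N -> (forall xs, size xs = r.-1 -> f xs = h xs) ->
  is_cochain g r f -> is_cochain g r h.
Proof.
move=> Hr E1 [Mf [s [Ds [C S]]]]; split.
  move=> p q x y c Hs; rewrite -!E1 ?Mf // size_cat /= -Hs; lia.
exists s; split=> //; split=> [xs u w Hs|Hr3 p q x y u Hs].
  by rewrite -!E1 ?C // size_rcons Hs; lia.
by rewrite -!E1 ?S // size_cat /= -Hs; lia.
Qed.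
End Cochains.

Section InC.
Variables (R : comNzRingType) (A : comAlgType R) (E : lmodType A) (g : E -> E -> A).
Hypotheses (gbil : form_is_A_bilinear g) (gsym : form_is_symmetric g).
Local Notation inC := (inC g).
Local Notation inCr := (inCr g).
Implicit Types (u v w : D E).

Lemma inC0 : inC 0.
Proof. split; first by exists 0%N. by move=> r _; exact: cochain_zero. Qed.
Lemma inCD u v : inC u -> inC v -> inC (u + v).
Proof.
case=> [[N1 H1] C1] [[N2 H2] C2]; split.
  by exists (maxn N1 N2) => xs Hxs; rewrite d1D H1 ?H2 ?addr0 //; lia.
by move=> r Hr; apply: cochain_add => //; [exact: C1 | exact: C2].
Qed.
Lemma inCN u : inC u -> inC (- u).
Proof.
case=> [[N1 H1] C1]; split; first by exists N1 => xs Hxs; rewrite d1N H1 ?oppr0.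
by move=> r Hr; apply: cochain_opp => //; exact: C1.
Qed.
Lemma inCS b u : inC u -> inC (signD b u).
Proof. by case: b => //; exact: inCN. Qed.

Lemma homog0 r : homog r (0 : D E).
Proof. by case: r. Qed.
Lemma homogD r u v : homog r u -> homog r v -> homog r (u + v).
Proof.
case: r => [H1 H2 xs|r [H1 K1] [H2 K2]]; first by rewrite d1D H1 H2 addr0.
by split=> [|xs Hxs]; rewrite ?d0D ?H1 ?H2 ?addr0 // d1D K1 ?K2 ?addr0.
Qed.
Lemma homogN r u : homog r u -> homog r (- u).
Proof.
case: r => [H1 xs|r [H1 K1]]; first by rewrite d1N H1 oppr0.
by split=> [|xs Hxs]; rewrite ?d0N ?H1 ?oppr0 // d1N K1 ?oppr0.
Qed.

Lemma inCr0 r : inCr r 0.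
Proof. split; [exact: homog0 | exact: inC0]. Qed.
Lemma inCrD r u v : inCr r u -> inCr r v -> inCr r (u + v).
Proof. by case=> H1 K1 [H2 K2]; split; [exact: homogD | exact: inCD]. Qed.
Lemma inCrN r u : inCr r u -> inCr r (- u).
Proof. by case=> H1 K1; split; [exact: homogN | exact: inCN]. Qed.
Lemma inCrS r b u : inCr r u -> inCr r (signD b u).
Proof. by case: b => //; exact: inCrN. Qed.
Lemma inCr_inC r u : inCr r u -> inC u.
Proof. by case. Qed.

Lemma inCr_ofA a : inCr 0 (ofA E a).
Proof. split=> //; split; first by exists 0%N. by move=> r _; exact: cochain_zero. Qed.
Lemma inCr_ofE x : inCr 1 (ofE x).
Proof.
split; first by split=> // -[].
split; first by exists 1%N => -[].
move=> r Hr; apply: (cochain_ext (f := fun _ => 0)) => //; last exact: cochain_zero.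
by case=> //=; lia.
Qed.
Lemma inCr0E u : inCr 0 u -> u = ofA E (d0 u).
Proof. by case=> H _; apply: eqD => //= xs; rewrite H. Qed.
Lemma inCr1E u : inCr 1 u -> u = ofE (d1 u [::]).
Proof. by case=> -[H0 H1] _; apply: eqD => //= -[|x xs] //; rewrite H1. Qed.
End InC.

Section Br.
Variables (R : comNzRingType) (A : comAlgType R) (E : lmodType A) (g : E -> E -> A).
Variables (br wd : D E -> D E -> D E).
Hypotheses (gbil : form_is_A_bilinear g) (gsym : form_is_symmetric g).
Hypotheses (gnd : form_is_strongly_nondegenerate g) (gfull : form_is_full g).
Hypotheses (BS : bracket_spec g br) (WS : wedge_spec g br wd).
Local Notation inC := (inC g).
Local Notation inCr := (inCr g).
Implicit Types (u v w : D E).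
Let inC0 := inC0 gbil gsym.
Let inCr0 := inCr0 gbil gsym.
Let inCr_ofE := inCr_ofE gbil gsym.
Let inCr_ofA := inCr_ofA gbil gsym.
Let inCD := inCD gbil gsym.
Let inCN := inCN gbil gsym.
Let inCS := inCS gbil gsym.
Let inCrD := inCrD gbil gsym.
Let inCrN := inCrN gbil gsym.
Let inCrS := inCrS gbil gsym.
Let gDl := gDl gbil.
Let gNl := gNl gbil.
Let gZl := gZl gbil.
Let g0l := g0l gbil.
Let gDr := gDr gbil gsym.
Let gNr := gNr gbil gsym.
Let gZr := gZr gbil gsym.
Let g0r := g0r gbil gsym.

Lemma brDl u v w : inC u -> inC v -> inC w -> br (u + v) w = br u w + br v w.
Proof. move=> Hu Hv Hw; apply: (flinD (P := inC) (f := fun z => br z w)) => // c a b Ha Hb; exact (br_linl BS c Ha Hb Hw). Qed.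
Lemma brDr u v w : inC u -> inC v -> inC w -> br w (u + v) = br w u + br w v.
Proof. move=> Hu Hv Hw; apply: (flinD (P := inC) (f := br w)) => // c a b Ha Hb; exact (br_linr BS c Ha Hb Hw). Qed.
Lemma wdDl u v w : inC u -> inC v -> inC w -> wd (u + v) w = wd u w + wd v w.
Proof. move=> Hu Hv Hw; apply: (flinD (P := inC) (f := fun z => wd z w)) => // c a b Ha Hb; exact (wd_linl WS c Ha Hb Hw). Qed.
Lemma wdDr u v w : inC u -> inC v -> inC w -> wd w (u + v) = wd w u + wd w v.
Proof. move=> Hu Hv Hw; apply: (flinD (P := inC) (f := wd w)) => // c a b Ha Hb; exact (wd_linr WS c Ha Hb Hw). Qed.
Lemma br0l w : inC w -> br 0 w = 0.
Proof. move=> Hw; apply: (@flin0 _ _ _ inC inC0 (fun z => br z w)) => // c a b Ha Hb; exact (br_linl BS c Ha Hb Hw). Qed.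
Lemma br0r w : inC w -> br w 0 = 0.
Proof. move=> Hw; apply: (@flin0 _ _ _ inC inC0 (br w)) => // c a b Ha Hb; exact (br_linr BS c Ha Hb Hw). Qed.
Lemma wd0l w : inC w -> wd 0 w = 0.
Proof. move=> Hw; apply: (@flin0 _ _ _ inC inC0 (fun z => wd z w)) => // c a b Ha Hb; exact (wd_linl WS c Ha Hb Hw). Qed.
Lemma wd0r w : inC w -> wd w 0 = 0.
Proof. move=> Hw; apply: (@flin0 _ _ _ inC inC0 (wd w)) => // c a b Ha Hb; exact (wd_linr WS c Ha Hb Hw). Qed.
Lemma brSl b u w : inC u -> inC w -> br (signD b u) w = signD b (br u w).
Proof. move=> Hu Hw; apply: (@flinS _ _ _ inC inC0 (fun z => br z w)) => // c a d Ha Hd; exact (br_linl BS c Ha Hd Hw). Qed.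
Lemma brSr b u w : inC u -> inC w -> br w (signD b u) = signD b (br w u).
Proof. move=> Hu Hw; apply: (@flinS _ _ _ inC inC0 (br w)) => // c a d Ha Hd; exact (br_linr BS c Ha Hd Hw). Qed.
Lemma wdSl b u w : inC u -> inC w -> wd (signD b u) w = signD b (wd u w).
Proof. move=> Hu Hw; apply: (@flinS _ _ _ inC inC0 (fun z => wd z w)) => // c a d Ha Hd; exact (wd_linl WS c Ha Hd Hw). Qed.
Lemma wdSr b u w : inC u -> inC w -> wd w (signD b u) = signD b (wd w u).
Proof. move=> Hu Hw; apply: (@flinS _ _ _ inC inC0 (wd w)) => // c a d Ha Hd; exact (wd_linr WS c Ha Hd Hw). Qed.
Lemma brNl u w : inC u -> inC w -> br (- u) w = - br u w.
Proof. exact: (brSl true). Qed.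
Lemma brNr u w : inC u -> inC w -> br w (- u) = - br w u.
Proof. exact: (brSr true). Qed.
Lemma wdNl u w : inC u -> inC w -> wd (- u) w = - wd u w.
Proof. exact: (wdSl true). Qed.
Lemma wdNr u w : inC u -> inC w -> wd w (- u) = - wd w u.
Proof. exact: (wdSr true). Qed.

Lemma brdeg r s u v : inCr r u -> inCr s v -> inCr (r + s - 2) (br u v).
Proof. move=> Hu Hv; have := br_deg BS Hu Hv; case: ifP => // _ ->; exact: inCr0. Qed.
Lemma brlow r s u v : inCr r u -> inCr s v -> (r + s < 2)%N -> br u v = 0.
Proof. move=> Hu Hv H; have := br_deg BS Hu Hv; rewrite leqNgt H /=; exact. Qed.
Lemma brC r s u v : inCr r u -> inCr s v -> inC (br u v).
Proof. move=> Hu Hv; exact: inCr_inC (brdeg Hu Hv). Qed.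
Lemma wdC r s u v : inCr r u -> inCr s v -> inC (wd u v).
Proof. move=> Hu Hv; exact (inCr_inC (wd_deg WS Hu Hv)). Qed.

Definition Hp (b : bool) (m : nat) (U : D E) := inCr m U /\ (odd m = b \/ U = 0).
Lemma Hp_of r u : inCr r u -> Hp (odd r) r u.
Proof. by move=> H; split=> //; left. Qed.
Lemma Hp_inC b m U : Hp b m U -> inC U.
Proof. by case=> /inCr_inC. Qed.
Lemma Hp_br r s u v : inCr r u -> inCr s v -> Hp (odd (r + s)) (r + s - 2) (br u v).
Proof.
move=> Hu Hv; split; first exact: brdeg.
case: (leqP 2 (r + s)) => H; last by right; exact: brlow Hu Hv H.
left; by rewrite -[in RHS](subnK H) addn2 /= negbK.
Qed.
Lemma Hp_brX r u x : inCr r u -> Hp (~~ odd r) r.-1 (br u (ofE x)).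
Proof.
move=> Hu; have := Hp_br Hu (inCr_ofE x); by rewrite addn1 subn2 /=.
Qed.
Lemma Hp_wd r s u v : inCr r u -> inCr s v -> Hp (odd (r + s)) (r + s) (wd u v).
Proof. by move=> Hu Hv; apply: Hp_of; exact (wd_deg WS Hu Hv). Qed.
Lemma Hp_S b m c U : Hp b m U -> Hp b m (signD c U).
Proof. by case=> H [H1|->]; split; [exact: inCrS | left | exact: inCrS | right; rewrite signD0]. Qed.
Lemma Hp_D b m U V : Hp b m U -> Hp b m V -> Hp b m (U + V).
Proof.
case=> H1 [P1|->]; last by rewrite add0r.
case=> H2 [P2|->]; last by rewrite addr0; split=> //; left.
by split; [exact: inCrD | left].
Qed.

Lemma brX0 u x : inCr 0 u -> br u (ofE x) = 0.
Proof. move=> Hu; apply: brlow Hu (inCr_ofE x) _ => //. Qed.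
Lemma brX0' u x : inCr 0 u -> br (ofE x) u = 0.
Proof. move=> Hu; apply: brlow (inCr_ofE x) Hu _ => //. Qed.

Ltac zsimp := repeat (rewrite ?br0l ?br0r ?wd0l ?wd0r ?signD0 ?add0r ?addr0 //).

Lemma recZ b m c k U V x : Hp b m U -> Hp c k V ->
  br (br U V) (ofE x) = signD c (br (br U (ofE x)) V) + br U (br V (ofE x)).
Proof.
move=> [HU PU] [HV PV]; have HX := inCr_ofE x.
have CU := inCr_inC HU; have CV := inCr_inC HV; have CX := inCr_inC HX.
have C1 := brC HU HX; have C2 := brC HV HX.
case: PU => [PU|->]; last by zsimp.
case: PV => [<-|->]; first exact (br_rec BS x HU HV).
by zsimp.
Qed.
Lemma skewZ b m c k U V : Hp b m U -> Hp c k V -> br U V = signD (~~ (b && c)) (br V U).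
Proof.
move=> [HU PU] [HV PV]; have CU := inCr_inC HU; have CV := inCr_inC HV.
case: PU => [<-|->]; last by zsimp.
case: PV => [<-|->]; last by zsimp.
by rewrite (br_skew BS HU HV) oddM.
Qed.
Lemma wrecZ b m c k U V x : Hp b m U -> Hp c k V ->
  br (wd U V) (ofE x) = signD c (wd (br U (ofE x)) V) + wd U (br V (ofE x)).
Proof.
move=> [HU PU] [HV PV]; have HX := inCr_ofE x.
have CU := inCr_inC HU; have CV := inCr_inC HV; have CX := inCr_inC HX.
have C1 := brC HU HX; have C2 := brC HV HX.
case: PU => [PU|->]; last by zsimp.
case: PV => [<-|->]; first exact (wd_rec WS x HU HV).
by zsimp.
Qed.

Lemma det k X Y : (0 < k)%N -> inCr k X -> inCr k Y ->
  (forall x, br X (ofE x) = br Y (ofE x)) -> X = Y.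
Proof.
case: k => // -[_|k _] HX HY H.
  rewrite (inCr1E HX) (inCr1E HY) in H *; congr ofE.
  set p := d1 X [::] in H *; set q := d1 Y [::] in H *.
  have Hg y : g p y = g q y.
    by have := H y; rewrite !(br_EE BS) => /(congr1 (@d0 _ _ _)).
  have [z [_ Uz]] := gnd (phi := g q) (fun c x y => gbil.2 c q x y).
  by rewrite -(Uz p) ?(Uz q).
have [HX0 HX1] := HX.1; have [HY0 HY1] := HY.1.
apply: eqD => [|[|x xs]]; first by rewrite HX0 HY0.
  by rewrite HX1 ?HY1.
have := H x; rewrite (br_rE BS x _ HX).1 ?(br_rE BS x _ HY).1 // => /(congr1 (fun z => d1 z xs)) /=.
by [].
Qed.

Ltac signs := rewrite ?signDD ?signDK ?signDE.

Lemma wd_comm_h n : forall r s u v, (r + s <= n)%N -> inCr r u -> inCr s v ->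
  wd u v = signD (odd r && odd s) (wd v u).
Proof.
elim: n => [|n IH] r s u v Hn Hu Hv.
  have r0 : r = 0%N by lia. have s0 : s = 0%N by lia. subst.
  by rewrite (inCr0E Hu) (inCr0E Hv) !(wd_AA WS) mulrC.
case: (posnP (r + s)) => [H0|Hpos].
  have r0 : r = 0%N by lia. have s0 : s = 0%N by lia. subst.
  by rewrite (inCr0E Hu) (inCr0E Hv) !(wd_AA WS) mulrC.
have Cu := inCr_inC Hu; have Cv := inCr_inC Hv.
apply: (det Hpos); first exact: (wd_deg WS Hu Hv).
  by apply: inCrS; rewrite addnC; exact: (wd_deg WS Hv Hu).
move=> x; have Cx := inCr_inC (inCr_ofE x).
have Cux := brC Hu (inCr_ofE x); have Cvx := brC Hv (inCr_ofE x).
have E1 : wd (br u (ofE x)) v = signD (~~ odd r && odd s) (wd v (br u (ofE x))).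
  destruct r as [|r].
    by rewrite brX0 // wd0l // wd0r // signD0.
  have [H _] := Hp_brX x Hu; rewrite /= negbK; apply: (IH r s) => //; lia.
have E2 : wd u (br v (ofE x)) = signD (odd r && ~~ odd s) (wd (br v (ofE x)) u).
  destruct s as [|s].
    by rewrite brX0 // wd0l // wd0r // signD0.
  have [H _] := Hp_brX x Hv; rewrite /= negbK; apply: (IH r s) => //; lia.
have Cvu := wdC Hv Hu; rewrite (wrecZ x (Hp_of Hu) (Hp_of Hv)) brSl //.
rewrite (wrecZ x (Hp_of Hv) (Hp_of Hu)) E1 E2.
by signs; case: (odd r); case: (odd s) => /=; zring.
Qed.

Lemma wd_assoc_h n : forall r s t u v w, (r + s + t <= n)%N -> inCr r u -> inCr s v -> inCr t w ->
  wd (wd u v) w = wd u (wd v w).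
Proof.
elim: n => [|n IH] r s t u v w Hn Hu Hv Hw.
  have r0 : r = 0%N by lia. have s0 : s = 0%N by lia. have t0 : t = 0%N by lia. subst.
  by rewrite (inCr0E Hu) (inCr0E Hv) (inCr0E Hw) !(wd_AA WS) mulrA.
case: (posnP (r + s + t)) => [H0|Hpos].
  have r0 : r = 0%N by lia. have s0 : s = 0%N by lia. have t0 : t = 0%N by lia. subst.
  by rewrite (inCr0E Hu) (inCr0E Hv) (inCr0E Hw) !(wd_AA WS) mulrA.
have Cu := inCr_inC Hu; have Cv := inCr_inC Hv; have Cw := inCr_inC Hw.
have Huv := wd_deg WS Hu Hv; have Hvw := wd_deg WS Hv Hw.
have Cuv := inCr_inC Huv; have Cvw := inCr_inC Hvw.
apply: (det Hpos); first exact: (wd_deg WS Huv Hw).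
  by rewrite -addnA; exact: (wd_deg WS Hu Hvw).
move=> x; have Cx := inCr_inC (inCr_ofE x).
have Cux := brC Hu (inCr_ofE x); have Cvx := brC Hv (inCr_ofE x); have Cwx := brC Hw (inCr_ofE x).
have E1 : wd (wd (br u (ofE x)) v) w = wd (br u (ofE x)) (wd v w).
  destruct r as [|r].
    by rewrite brX0 // !wd0l // (wdC Hv Hw).
  have [H _] := Hp_brX x Hu; apply: (IH r s t) => //; lia.
have E2 : wd (wd u (br v (ofE x))) w = wd u (wd (br v (ofE x)) w).
  destruct s as [|s].
    by rewrite brX0 // !wd0r // wd0l // wd0r.
  have [H _] := Hp_brX x Hv; apply: (IH r s t) => //; lia.
have E3 : wd (wd u v) (br w (ofE x)) = wd u (wd v (br w (ofE x))).
  destruct t as [|t].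
    by rewrite brX0 // !wd0r.
  have [H _] := Hp_brX x Hw; apply: (IH r s t) => //; lia.
rewrite (wrecZ x (Hp_wd Hu Hv) (Hp_of Hw)) (wrecZ x (Hp_of Hu) (Hp_of Hv)).
rewrite (wrecZ x (Hp_of Hu) (Hp_wd Hv Hw)) (wrecZ x (Hp_of Hv) (Hp_of Hw)).
have Hux := (Hp_brX x Hu).1; have Hvx := (Hp_brX x Hv).1; have Hwx := (Hp_brX x Hw).1.
rewrite wdDl ?wdSl ?wdDr ?wdSr ?E1 ?E2 ?E3 //;
  first by rewrite oddD; signs; case: (odd s); case: (odd t) => /=; zring.
all: try apply: inCS; apply: wdC; eassumption.
Qed.


Ltac cr := first [ eassumption | apply: inCr_ofE | apply: inCr_ofA | apply: inCr0
  | apply: brdeg; cr | apply: (wd_deg WS); cr | apply: inCrS; cr | apply: inCrN; cr ].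
Ltac cC := first [ apply: inCD; cC | apply: inCS; cC | apply: inCN; cC | apply: inC0
  | apply: (@inCr_inC _ _ _ g); cr ].

Definition Jac r s u v w :=
  br u (br v w) = br (br u v) w + signD (odd r && odd s) (br v (br u w)).
Definition JacAll r s t := forall u v w, inCr r u -> inCr s v -> inCr t w -> Jac r s u v w.

Lemma nestA r s t u v w : inCr r u -> inCr s v -> inCr t w ->
  inCr (r + s + t - 4) (br u (br v w)).
Proof.
move=> Hu Hv Hw; case: (leqP 2 (s + t)) => H.
  have -> : (r + s + t - 4 = r + (s + t - 2) - 2)%N by lia. by cr.
by rewrite (brlow Hv Hw H) br0r //; cC.
Qed.
Lemma nestB r s t u v w : inCr r u -> inCr s v -> inCr t w ->
  inCr (r + s + t - 4) (br (br u v) w).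
Proof.
move=> Hu Hv Hw; case: (leqP 2 (r + s)) => H.
  have -> : (r + s + t - 4 = (r + s - 2) + t - 2)%N by lia. by cr.
by rewrite (brlow Hu Hv H) br0l //; cC.
Qed.
Lemma lowA r s t u v w : inCr r u -> inCr s v -> inCr t w -> (r + s + t <= 3)%N ->
  br u (br v w) = 0.
Proof.
move=> Hu Hv Hw Hn; case: (leqP 2 (s + t)) => H.
  apply: (brlow Hu (brdeg Hv Hw)); lia.
by rewrite (brlow Hv Hw H) br0r //; cC.
Qed.
Lemma lowB r s t u v w : inCr r u -> inCr s v -> inCr t w -> (r + s + t <= 3)%N ->
  br (br u v) w = 0.
Proof.
move=> Hu Hv Hw Hn; case: (leqP 2 (r + s)) => H.
  apply: (brlow (brdeg Hu Hv) Hw); lia.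
by rewrite (brlow Hu Hv H) br0l //; cC.
Qed.

Lemma jac_low r s t : (r + s + t <= 3)%N -> JacAll r s t.
Proof.
move=> Hn u v w Hu Hv Hw; rewrite /Jac (lowA Hu Hv Hw Hn) (lowB Hu Hv Hw Hn).
by rewrite (lowA Hv Hu Hw) ?signD0 ?addr0 //; lia.
Qed.

Lemma jac_sw12 r s t : JacAll r s t -> JacAll s r t.
Proof.
move=> J u v w Hu Hv Hw; have := J v u w Hv Hu Hw; rewrite /Jac => J1.
rewrite J1 (skewZ (Hp_of Hu) (Hp_of Hv)) brSl; last 2 first; try cC.
by signs; case: (odd r); case: (odd s) => /=; zring.
Qed.

Lemma jac_sw23 r s t : JacAll r s t -> JacAll r t s.
Proof.
move=> J u v w Hu Hv Hw; have := J u w v Hu Hw Hv; rewrite /Jac => J1.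
rewrite (skewZ (Hp_of Hv) (Hp_of Hw)) brSr; last 2 first; try cC.
rewrite J1 (skewZ (Hp_br Hu Hv) (Hp_of Hw)) (skewZ (Hp_of Hv) (Hp_br Hu Hw)).
by rewrite !oddD; signs; case: (odd r); case: (odd s); case: (odd t) => /=; zring.
Qed.

Lemma jac_t1 r s : JacAll r s 1.
Proof.
move=> u v w Hu Hv Hw; rewrite /Jac (inCr1E Hw); set x := d1 w [::].
rewrite (recZ x (Hp_of Hu) (Hp_of Hv)) (skewZ (Hp_of Hv) (Hp_brX x Hu)).
by signs; case: (odd r); case: (odd s) => /=; zring.
Qed.

Lemma full_ext (f1 f2 : A -> A) : (forall a b, f1 (a + b) = f1 a + f1 b) ->
  (forall a b, f2 (a + b) = f2 a + f2 b) -> (forall p q, f1 (g p q) = f2 (g p q)) ->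
  forall a, f1 a = f2 a.
Proof.
move=> A1 A2 H a; have [s ->] := gfull a.
have Z (f : A -> A) : (forall a b, f (a + b) = f a + f b) -> f 0 = 0.
  by move=> Af; have := Af 0 0; rewrite addr0 => K; apply: (addrI (f 0)); rewrite addr0 -K.
elim: s => [|[p q] s IH]; first by rewrite !big_nil (Z _ A1) (Z _ A2).
by rewrite !big_cons A1 A2 IH H.
Qed.

Definition del X a := d0 (br X (ofA E a)).
Definition ev (X : D E) p := d1 X [:: p].

Lemma ofED (x y : E) : ofE (x + y) = ofE x + ofE y.
Proof. by apply: eqD => [|[|z zs]] //=; rewrite addr0. Qed.
Lemma ofEN (x : E) : ofE (- x) = - ofE x.
Proof. by apply: eqD => [|[|z zs]] //=; rewrite oppr0. Qed.

Lemma brXA X a : inCr 2 X -> br X (ofA E a) = ofA E (del X a).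
Proof. by move=> HX; have H0 : inCr 0 (br X (ofA E a)) := brdeg HX (inCr_ofA a); exact: (inCr0E H0). Qed.
Lemma brAX X a : inCr 2 X -> br (ofA E a) X = - ofA E (del X a).
Proof. by move=> HX; rewrite (skewZ (Hp_of (inCr_ofA a)) (Hp_of HX)) /= brXA. Qed.
Lemma delD X a b : inCr 2 X -> del X (a + b) = del X a + del X b.
Proof. by move=> HX; rewrite /del ofAD brDr //; cC. Qed.
Lemma del_spec X : inCr 2 X -> exists tau, symbol_spec g 2 (d1 X) tau.
Proof. by case=> _ [_ C]; have [_ ?] := C 2%N (leqnn 2). Qed.
Lemma del_sym X tau a : inCr 2 X -> symbol_spec g 2 (d1 X) tau -> del X a = tau [::] a.
Proof. by move=> HX Ht; rewrite /del (br_2A BS a HX Ht).1. Qed.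
Lemma delg X p q : inCr 2 X -> del X (g p q) = g (ev X p) q + g p (ev X q).
Proof.
move=> HX; have [tau Ht] := del_spec HX; rewrite (del_sym _ HX Ht).
by rewrite (Ht.2.1 [::] p q).
Qed.
Lemma delM X a b : inCr 2 X -> del X (a * b) = del X a * b + a * del X b.
Proof.
move=> HX; have [tau Ht] := del_spec HX; rewrite !(del_sym _ HX Ht).
by have [H1 _] := Ht.1; have [_ ->] := H1 [::] erefl.
Qed.
Lemma insE2 X p : inCr 2 X -> ins p X = ofE (ev X p).
Proof. by case=> -[H0 H1] _; apply: eqD => //= -[|y ys] //; rewrite H1. Qed.
Lemma brXE X p : inCr 2 X -> br X (ofE p) = ofE (ev X p).
Proof. by move=> HX; rewrite (br_rE BS p (leqnn 2) HX).1 insE2. Qed.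
Lemma brEX X p : inCr 2 X -> br (ofE p) X = - ofE (ev X p).
Proof. by move=> HX; rewrite (br_rE BS p (leqnn 2) HX).2 insE2. Qed.
Lemma evE X p Y : inCr 2 X -> br X (ofE p) = ofE Y -> ev X p = Y.
Proof. by move=> HX; rewrite brXE // => /(congr1 (fun z => d1 z [::])). Qed.
Lemma brA0 a x : br (ofA E a) (ofE x) = 0.
Proof. exact: (br_AE BS a x).1. Qed.
Lemma brE0 a x : br (ofE x) (ofA E a) = 0.
Proof. exact: (br_AE BS a x).2. Qed.
Lemma brEE x y : br (ofE x) (ofE y) = ofA E (g x y).
Proof. exact: (br_EE BS x y). Qed.

Lemma ev_br22 u v p : inCr 2 u -> inCr 2 v ->
  ev (br u v) p = ev u (ev v p) - ev v (ev u p).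
Proof.
move=> Hu Hv; have Huv : inCr 2 (br u v) := brdeg Hu Hv; apply: (evE Huv).
rewrite (recZ p (Hp_of Hu) (Hp_of Hv)) /= !brXE // brEX //.
by rewrite ofED ofEN addrC.
Qed.

Lemma jac_220 : JacAll 2 2 0.
Proof.
move=> u v w Hu Hv Hw; rewrite /Jac (inCr0E Hw); set a := d0 w.
have Huv : inCr 2 (br u v) := brdeg Hu Hv.
rewrite (brXA _ Hv) (brXA _ Hu) (brXA _ Huv) (brXA _ Hu) (brXA _ Hv) /= -ofAD.
congr (ofA E _); apply: (full_ext (f1 := fun a => del u (del v a))
   (f2 := fun a => del (br u v) a + del v (del u a))) => [b c|b c|p q].
- by rewrite !delD.
- by rewrite !delD //; ring.
rewrite !delg // !delD // !delg // !ev_br22 // !gDl !gDr !gNl !gNr; ring.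
Qed.

Lemma K4 u a b : inCr 4 u -> del (br u (ofA E a)) b = del (br u (ofA E b)) a.
Proof.
move=> Hu; have [_ [_ C]] := Hu; have [_ [sig Ss]] := C 4%N isT.
have Cu := inCr_inC Hu.
have X2 c : inCr 2 (br u (ofA E c)) := brdeg Hu (inCr_ofA c).
have step1 c p q : g (ev (br u (ofA E c)) p) q = sig [:: p; q] c.
  have Hup : inCr 3 (br u (ofE p)) := brdeg Hu (inCr_ofE p).
  have Hupq : inCr 2 (br (br u (ofE p)) (ofE q)) := brdeg Hup (inCr_ofE q).
  have E1 : br (br u (ofA E c)) (ofE p) = br (br u (ofE p)) (ofA E c).
    by rewrite (recZ p (Hp_of Hu) (Hp_of (inCr_ofA c))) brA0 br0r ?addr0.
  have := congr1 (@d0 _ _ _) (brEE (ev (br u (ofA E c)) p) q).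
  rewrite -brXE // E1 (recZ q (Hp_of Hup) (Hp_of (inCr_ofA c))) brA0 br0r ?addr0; try cC.
  move=> /= <-; rewrite -/(del _ c).
  have Yeq xs : d1 (br (br u (ofE p)) (ofE q)) xs = d1 u (p :: q :: xs).
    by rewrite (br_rE BS q _ Hup).1 // (br_rE BS p _ Hu).1.
  apply: (@del_sym _ (fun _ => sig [:: p; q]) c Hupq); split; last split.
  - split=> [xs Hxs|P Q x y c' a' Hs]; last by [].
    by have [H _] := Ss.1; apply: H.
  - move=> [|//] u1 w1 _ /=; rewrite !Yeq.
    by rewrite (Ss.2.1 [:: p; q] u1 w1).
  - by [].
have F1 c p q : del (br u (ofA E c)) (g p q) = sig [:: p; q] c + sig [:: q; p] c.
  by rewrite delg // step1 gsym step1.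
have FD c d e : del (br u (ofA E (c + d))) e =
    del (br u (ofA E c)) e + del (br u (ofA E d)) e.
  by rewrite /del ofAD brDr ?brDl ?d0D //; cC.
have cond2 c d x y : sig [:: c; d] (g x y) = g (d1 u [:: x; y; c] + d1 u [:: y; x; c]) d.
  by rewrite (Ss.2.2 isT [::] [:: c] x y d).
have cond1 y z p q : sig [:: y; z] (g p q) = g (d1 u [:: y; z; p]) q + g p (d1 u [:: y; z; q]).
  by rewrite (Ss.2.1 [:: y; z] p q).
apply: (full_ext (f1 := fun b => del (br u (ofA E a)) b)
   (f2 := fun b => del (br u (ofA E b)) a)) => [c d|c d|p q] //.
- by rewrite delD.
apply: (full_ext (f1 := fun a => del (br u (ofA E a)) (g p q))
   (f2 := fun a => del (br u (ofA E (g p q))) a)) => [c d|c d|y z] //.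
- by rewrite delD.
rewrite !F1 ![in LHS]cond2 ![in RHS]cond1 !gDl !(gsym p); ring.
Qed.

Lemma jac_400 : JacAll 4 0 0.
Proof.
move=> u v w Hu Hv Hw; rewrite /Jac (inCr0E Hv) (inCr0E Hw).
set a := d0 v; set b := d0 w.
rewrite (br_AA BS) br0r; last by cC.
rewrite (brXA _ (brdeg Hu (inCr_ofA a))) (brAX _ (brdeg Hu (inCr_ofA b))) /=.
by rewrite K4 // subrr.
Qed.

Lemma jac_4 r s t : (r + s + t = 4)%N -> JacAll r s t.
Proof.
move=> H.
have J031 := @jac_t1 0 3. have J301 := @jac_t1 3 0.
have J400 := jac_400; have J220 := jac_220.
have J040 := jac_sw12 J400. have J004 := jac_sw23 J040.
have J202 := jac_sw23 J220. have J022 := jac_sw12 J202.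
have J310 := jac_sw23 J301. have J130 := jac_sw12 J310.
have J103 := jac_sw23 J130. have J013 := jac_sw23 J031.
have J112 := jac_sw23 (@jac_t1 1 2).
case: t H => [|[|[|[|[|t]]]]] H; try (exact: jac_t1); try lia;
case: s H => [|[|[|[|[|s]]]]] H; try lia;
case: r H => [|[|[|[|[|r]]]]] H; try lia; assumption.
Qed.

Lemma jac_all n : forall r s t, (r + s + t <= n)%N -> JacAll r s t.
Proof.
elim: n => [|n IH] r s t Hn; first by apply: jac_low; lia.
case: (leqP (r + s + t) 3) => H3; first exact: jac_low.
case: (ltngtP (r + s + t) 4) => H4; first lia; last exact: jac_4.
move=> u v w Hu Hv Hw; rewrite /Jac.
have Hk : (0 < r + s + t - 4)%N by lia.
have Cu := inCr_inC Hu; have Cv := inCr_inC Hv; have Cw := inCr_inC Hw.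
apply: (det Hk); first exact: nestA.
  apply: inCrD; first exact: nestB.
  apply: inCrS; rewrite (_ : (r + s + t = s + r + t)%N); [exact: nestA | lia].
move=> x.
have E1 : br (br u (ofE x)) (br v w) = br (br (br u (ofE x)) v) w +
    signD (~~ odd r && odd s) (br v (br (br u (ofE x)) w)).
  destruct r as [|r].
    rewrite brX0 //; zsimp; cC.
  have [H _] := Hp_brX x Hu; rewrite /= negbK; apply: (IH r s t) => //; lia.
have E2 : br u (br (br v (ofE x)) w) = br (br u (br v (ofE x))) w +
    signD (odd r && ~~ odd s) (br (br v (ofE x)) (br u w)).
  destruct s as [|s].
    rewrite brX0 //; zsimp; cC.
  have [H _] := Hp_brX x Hv; rewrite /= negbK; apply: (IH r s t) => //; lia.
have E3 : br u (br v (br w (ofE x))) = br (br u v) (br w (ofE x)) +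
    signD (odd r && odd s) (br v (br u (br w (ofE x)))).
  destruct t as [|t].
    rewrite brX0 //; zsimp; cC.
  have [H _] := Hp_brX x Hw; apply: (IH r s t) => //; lia.
rewrite (recZ x (Hp_of Hu) (Hp_br Hv Hw)) (recZ x (Hp_of Hv) (Hp_of Hw)).
rewrite brDl; try cC. rewrite brSl; try cC.
rewrite (recZ x (Hp_br Hu Hv) (Hp_of Hw)) (recZ x (Hp_of Hu) (Hp_of Hv)).
rewrite (recZ x (Hp_of Hv) (Hp_br Hu Hw)) (recZ x (Hp_of Hu) (Hp_of Hw)).
rewrite !brDr; try cC. rewrite !brSr; try cC. rewrite !brDl; try cC. rewrite !brSl; try cC.
rewrite E1 E2 E3.
by rewrite !oddD; signs; case: (odd r); case: (odd s); case: (odd t) => /=; zring.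
Qed.

Definition Leib r s u v w :=
  br u (wd v w) = wd (br u v) w + signD (odd r && odd s) (wd v (br u w)).
Definition LeibAll r s t := forall u v w, inCr r u -> inCr s v -> inCr t w -> Leib r s u v w.

Lemma nestW1 r s t u v w : inCr r u -> inCr s v -> inCr t w ->
  inCr (r + s + t - 2) (br u (wd v w)).
Proof. by move=> Hu Hv Hw; rewrite -addnA; cr. Qed.
Lemma nestW2 r s t u v w : inCr r u -> inCr s v -> inCr t w ->
  inCr (r + s + t - 2) (wd (br u v) w).
Proof.
move=> Hu Hv Hw; case: (leqP 2 (r + s)) => H.
  have -> : (r + s + t - 2 = (r + s - 2) + t)%N by lia. by cr.
by rewrite (brlow Hu Hv H) wd0l //; cC.
Qed.
Lemma nestW3 r s t u v w : inCr r u -> inCr s v -> inCr t w ->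
  inCr (r + s + t - 2) (wd v (br u w)).
Proof.
move=> Hu Hv Hw; case: (leqP 2 (r + t)) => H.
  have -> : (r + s + t - 2 = s + (r + t - 2))%N by lia. by cr.
by rewrite (brlow Hu Hw H) wd0r //; cC.
Qed.

Lemma leib_low r s t : (r + s + t <= 1)%N -> LeibAll r s t.
Proof.
move=> Hn u v w Hu Hv Hw; rewrite /Leib.
rewrite (brlow Hu (wd_deg WS Hv Hw)); last lia.
rewrite (brlow Hu Hv); last lia. rewrite (brlow Hu Hw); last lia.
by rewrite wd0l ?wd0r ?signD0 ?addr0 //; cC.
Qed.

Lemma evW1 x y p : ev (wd (ofE x) (ofE y)) p = - (g x p *: y) + g y p *: x.
Proof.
have HW : inCr 2 (wd (ofE x) (ofE y)) := wd_deg WS (inCr_ofE x) (inCr_ofE y).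
apply: (evE HW); rewrite (wrecZ p (Hp_of (inCr_ofE x)) (Hp_of (inCr_ofE y))) /=.
by rewrite !brEE (wd_AE WS _ y).1 (wd_AE WS _ x).2 ofED ofEN.
Qed.
Lemma evW2 v b p : inCr 2 v -> ev (wd v (ofA E b)) p = b *: ev v p.
Proof.
move=> Hv; have HW : inCr 2 (wd v (ofA E b)) := wd_deg WS Hv (inCr_ofA b).
apply: (evE HW); rewrite (wrecZ p (Hp_of Hv) (Hp_of (inCr_ofA b))) /=.
rewrite brA0 wd0r; last by cC.
by rewrite addr0 brXE // (wd_AE WS b (ev v p)).2.
Qed.
Lemma evW3 w b p : inCr 2 w -> ev (wd (ofA E b) w) p = b *: ev w p.
Proof.
move=> Hw; have HW : inCr 2 (wd (ofA E b) w) := wd_deg WS (inCr_ofA b) Hw.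
apply: (evE HW); rewrite (wrecZ p (Hp_of (inCr_ofA b)) (Hp_of Hw)) /=.
rewrite brA0 wd0l; last by cC.
by rewrite add0r brXE // (wd_AE WS b (ev w p)).1.
Qed.

Lemma leib_2 r s t : (r + s + t = 2)%N -> LeibAll r s t.
Proof.
move=> H u v w Hu Hv Hw; rewrite /Leib.
case: t H Hw => [|[|[|t]]] H Hw; try lia;
case: s H Hv => [|[|[|s]]] H Hv; try lia;
case: r H Hu => [|[|[|r]]] H Hu; try lia.
-
  rewrite (inCr0E Hv) (inCr0E Hw); set a := d0 v; set b := d0 w.
  rewrite (wd_AA WS) !(brXA _ Hu) !(wd_AA WS) /= -ofAD delM //.
-
  rewrite (inCr1E Hu) (inCr1E Hv) (inCr0E Hw); set x := d1 u [::]; set y := d1 v [::];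
  set a := d0 w.
  rewrite (wd_AE WS a y).2 !brEE brE0 wd0r ?signD0 ?addr0; last by cC.
  by rewrite (wd_AA WS) gZr mulrC.
-
  rewrite (inCr0E Hu) (inCr0E Hw); set a := d0 u; set b := d0 w.
  have HW : inCr 2 (wd v (ofA E b)) := wd_deg WS Hv (inCr_ofA b).
  rewrite (br_AA BS) wd0r ?signD0 ?addr0; last by cC.
  rewrite !brAX // wdNl; last 2 first; try cC.
  rewrite (wd_AA WS); congr (- ofA E _).
  apply: (full_ext (f1 := del (wd v (ofA E b))) (f2 := fun a => del v a * b))
    => [c d|c d|p q]; rewrite ?delD ?mulrDl //.
  by rewrite !delg // !evW2 // gZl gZr mulrDl; ring.
-
  rewrite (inCr1E Hu) (inCr0E Hv) (inCr1E Hw); set x := d1 u [::]; set a := d0 v;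
  set y := d1 w [::].
  rewrite (wd_AE WS a y).1 !brEE brE0 wd0l /=; last by cC.
  by rewrite (wd_AA WS) add0r gZr.
-
  rewrite (inCr0E Hu) (inCr1E Hv) (inCr1E Hw); set a := d0 u; set x := d1 v [::];
  set y := d1 w [::].
  have HW : inCr 2 (wd (ofE x) (ofE y)) := wd_deg WS (inCr_ofE x) (inCr_ofE y).
  rewrite !brA0 wd0l ?wd0r ?signD0 ?addr0; try cC.
  rewrite brAX // -ofA0 -ofAN; congr (ofA E _).
  suff -> : del (wd (ofE x) (ofE y)) a = 0 by rewrite oppr0.
  apply: (full_ext (f1 := del (wd (ofE x) (ofE y))) (f2 := fun _ => 0))
    => [c d|c d|p q]; rewrite ?delD ?addr0 //.
  rewrite delg // !evW1 gDl gDr !gNl !gNr !gZl !gZr !(gsym p); ring.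
-
  rewrite (inCr0E Hu) (inCr0E Hv); set a := d0 u; set b := d0 v.
  have HW : inCr 2 (wd (ofA E b) w) := wd_deg WS (inCr_ofA b) Hw.
  rewrite (br_AA BS) wd0l; last by cC.
  rewrite !brAX // wdNr; last 2 first; try cC.
  rewrite (wd_AA WS) add0r /=; congr (- ofA E _).
  apply: (full_ext (f1 := del (wd (ofA E b) w)) (f2 := fun a => b * del w a))
    => [c d|c d|p q]; rewrite ?delD ?mulrDr //.
  by rewrite !delg // !evW3 // gZl gZr mulrDr.
Qed.

Lemma leib_all n : forall r s t, (r + s + t <= n)%N -> LeibAll r s t.
Proof.
elim: n => [|n IH] r s t Hn; first by apply: leib_low; lia.
case: (leqP (r + s + t) 1) => H3; first exact: leib_low.
case: (ltngtP (r + s + t) 2) => H4; first lia; last exact: leib_2.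
move=> u v w Hu Hv Hw; rewrite /Leib.
have Hk : (0 < r + s + t - 2)%N by lia.
have Cu := inCr_inC Hu; have Cv := inCr_inC Hv; have Cw := inCr_inC Hw.
apply: (det Hk); first exact: nestW1.
  apply: inCrD; first exact: nestW2.
  apply: inCrS; exact: nestW3.
move=> x.
have E1 : br (br u (ofE x)) (wd v w) = wd (br (br u (ofE x)) v) w +
    signD (~~ odd r && odd s) (wd v (br (br u (ofE x)) w)).
  destruct r as [|r].
    rewrite brX0 //; zsimp; cC.
  have [H _] := Hp_brX x Hu; rewrite /= negbK; apply: (IH r s t) => //; lia.
have E2 : br u (wd (br v (ofE x)) w) = wd (br u (br v (ofE x))) w +
    signD (odd r && ~~ odd s) (wd (br v (ofE x)) (br u w)).
  destruct s as [|s].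
    rewrite brX0 //; zsimp; cC.
  have [H _] := Hp_brX x Hv; rewrite /= negbK; apply: (IH r s t) => //; lia.
have E3 : br u (wd v (br w (ofE x))) = wd (br u v) (br w (ofE x)) +
    signD (odd r && odd s) (wd v (br u (br w (ofE x)))).
  destruct t as [|t].
    rewrite brX0 //; zsimp; cC.
  have [H _] := Hp_brX x Hw; apply: (IH r s t) => //; lia.
rewrite (recZ x (Hp_of Hu) (Hp_wd Hv Hw)) (wrecZ x (Hp_of Hv) (Hp_of Hw)).
rewrite brDl; try cC. rewrite brSl; try cC.
rewrite (wrecZ x (Hp_br Hu Hv) (Hp_of Hw)) (recZ x (Hp_of Hu) (Hp_of Hv)).
rewrite (wrecZ x (Hp_of Hv) (Hp_br Hu Hw)) (recZ x (Hp_of Hu) (Hp_of Hw)).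
rewrite !brDr; try cC. rewrite !brSr; try cC. rewrite !wdDl; try cC. rewrite !wdSl; try cC.
rewrite !wdDr; try cC. rewrite !wdSr; try cC.
rewrite E1 E2 E3.
by rewrite !oddD; signs; case: (odd r); case: (odd s); case: (odd t) => /=; zring.
Qed.

Lemma inC_ind (P : D E -> Prop) : (forall r u, inCr r u -> P u) ->
  (forall u v, inC u -> inC v -> P u -> P v -> P (u + v)) -> forall u, inC u -> P u.
Proof.
move=> Hh Hadd u [[N HN] HC]; elim: N u HN HC => [|M IH] u HN HC.
  apply: (Hh 0%N); split; [move=> xs; exact: HN | split=> //; by exists 0%N].
pose comp := mkD 0 (fun xs => if size xs == M then d1 u xs else 0).
pose rest := mkD (d0 u) (fun xs => if size xs == M then 0 else d1 u xs).
have Hu : u = rest + comp.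
  by apply: eqD => [|xs] /=; rewrite ?addr0 //; case: ifP; rewrite ?add0r ?addr0.
have Hcomp : inCr M.+1 comp.
  split; first by split=> //= xs /negPf ->.
  split; first by exists M.+1 => xs Hxs /=; case: eqP => // Hs; lia.
  move=> r Hr; case: (eqVneq r.-1 M) => Hr1.
    apply: (cochain_ext (f := d1 u)) => //; last exact: HC.
    by move=> xs Hs /=; rewrite Hs Hr1 eqxx.
  apply: (cochain_ext (f := fun _ => 0)) => //; last exact: cochain_zero.
  by move=> xs Hs /=; rewrite Hs (negPf Hr1).
have Cu : inC u by split=> //; exists M.+1.
have Ccomp := inCr_inC Hcomp.
have Crest : inC rest.
  have -> : rest = u - comp by rewrite Hu addrK.
  exact: inCD (inCN _).
rewrite Hu; apply: Hadd => //; last exact: Hh Hcomp.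
apply: IH; last by case: Crest.
move=> xs Hxs /=; case: eqP => // Hs; apply: HN; lia.
Qed.

Lemma wd_inC u : inC u -> forall v, inC v -> inC (wd u v).
Proof.
move: u; apply: (inC_ind (P := fun u => forall v, inC v -> inC (wd u v)))
  => [r u Hu|u1 u2 C1 C2 IH1 IH2] v Cv.
  move: v Cv; apply: (inC_ind (P := fun v => inC (wd u v))) => [s v Hv|v1 v2 D1 D2 J1 J2].
    exact: wdC Hu Hv.
  by rewrite wdDr //; [exact: inCD | exact: inCr_inC Hu].
by rewrite wdDl //; apply: inCD; [exact: IH1 | exact: IH2].
Qed.

Lemma wd_assoc u : inC u -> forall v, inC v -> forall w, inC w ->
  wd (wd u v) w = wd u (wd v w).
Proof.
move: u; apply: (inC_ind (P := fun u => forall v, inC v -> forall w, inC w ->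
  wd (wd u v) w = wd u (wd v w))) => [r u Hu|u1 u2 C1 C2 IH1 IH2] v Cv w Cw; last first.
  rewrite wdDl ?wdDl ?IH1 ?IH2 ?wdDl //; try exact: wd_inC.
have Cu := inCr_inC Hu.
move: v Cv w Cw; apply: (inC_ind (P := fun v => forall w, inC w ->
  wd (wd u v) w = wd u (wd v w))) => [s v Hv|v1 v2 D1 D2 J1 J2] w Cw; last first.
  rewrite wdDr ?wdDl ?J1 ?J2 ?wdDr //; try exact: wd_inC.
have Cv := inCr_inC Hv.
move: w Cw; apply: (inC_ind (P := fun w => wd (wd u v) w = wd u (wd v w)))
  => [t w Hw|w1 w2 F1 F2 K1 K2].
  exact: (wd_assoc_h (leqnn _) Hu Hv Hw).
rewrite !wdDr ?K1 ?K2 //; try exact: wd_inC.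
Qed.

Lemma main_all :
  (forall u v w, inC u -> inC v -> inC w -> wd (wd u v) w = wd u (wd v w)) /\
  (forall r s u v, inCr r u -> inCr s v ->
     wd u v = signD (odd (r * s)) (wd v u) /\ inCr (r + s) (wd u v)) /\
  (forall r s u v, inCr r u -> inCr s v ->
     (if (2 <= r + s)%N then inCr (r + s - 2) (br u v) else br u v = zeroD E) /\
     br u v = signD (~~ odd (r * s)) (br v u)) /\
  (forall r s t u v w, inCr r u -> inCr s v -> inCr t w ->
     br u (br v w) = addD (br (br u v) w) (signD (odd (r * s)) (br v (br u w)))) /\
  (forall r s t u v w, inCr r u -> inCr s v -> inCr t w ->
     br u (wd v w) = addD (wd (br u v) w) (signD (odd (r * s)) (wd v (br u w)))).
Proof.
split; first by move=> u v w Cu Cv Cw; exact: wd_assoc.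
split.
  move=> r s u v Hu Hv; split; last exact: (wd_deg WS Hu Hv).
  by rewrite oddM; exact: (wd_comm_h (leqnn _) Hu Hv).
split.
  by move=> r s u v Hu Hv; split; [exact: (br_deg BS Hu Hv) | exact: (br_skew BS Hu Hv)].
split.
  move=> r s t u v w Hu Hv Hw; rewrite oddM.
  exact: (jac_all (leqnn _) Hu Hv Hw).
move=> r s t u v w Hu Hv Hw; rewrite oddM.
exact: (leib_all (leqnn _) Hu Hv Hw).
Qed.
End Br.

Theorem mainTheorem1 (R : comNzRingType) (A : comAlgType R) (E : lmodType A)
  (g : E -> E -> A) (br wd : D E -> D E -> D E) :
  Q_in_ring R ->
  fg_projective E ->
  form_is_A_bilinear g -> form_is_symmetric g -> form_is_strongly_nondegenerate g -> form_is_full g ->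
  bracket_spec g br -> wedge_spec g br wd ->
  (* (i) wedge: associative, graded commutative, degree 0 *)
  (forall u v w, inC g u -> inC g v -> inC g w -> wd (wd u v) w = wd u (wd v w)) /\
  (forall r s u v, inCr g r u -> inCr g s v ->
     wd u v = signD (odd (r * s)) (wd v u) /\ inCr g (r + s) (wd u v)) /\
  (* (ii) bracket: degree -2, graded skew-symmetric *)
  (forall r s u v, inCr g r u -> inCr g s v ->
     (if (2 <= r + s)%N then inCr g (r + s - 2) (br u v) else br u v = zeroD E) /\
     br u v = signD (~~ odd (r * s)) (br v u)) /\
  (* (iii) graded Jacobi identity *)
  (forall r s t u v w, inCr g r u -> inCr g s v -> inCr g t w ->
     br u (br v w) = addD (br (br u v) w) (signD (odd (r * s)) (br v (br u w)))) /\
  (* (iv) Leibniz rule *)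
  (forall r s t u v w, inCr g r u -> inCr g s v -> inCr g t w ->
     br u (wd v w) = addD (wd (br u v) w) (signD (odd (r * s)) (wd v (br u w)))).
Proof.
move=> _ _ gbil gsym gnd gfull BS WS.
exact: (main_all gbil gsym gnd gfull BS WS).
Qed.
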